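(* Let $\mathbb{X}$ be a Cartesian left additive category and $f_\bullet:A\to B$ a $\mathsf{D}$-sequence. Then (i) $\mathsf{D}[f_\bullet]$ is a $\mathsf{D}$-sequence; (ii) $\mathsf{T}(f_\bullet)$ is a $\mathsf{D}$-sequence; and (iii) $\langle1,0\rangle\cdot\mathsf{T}(f_\bullet)=f_\bullet\cdot\langle1,0\rangle$; (iv) $(1\times\pi_i)\cdot\mathsf{T}(f_\bullet)=\mathsf{T}_2(f_\bullet)\cdot(1\times\pi_i)$ for $i\in\{0,1\}$, where $\mathsf{T}_2(f_\bullet):=\langle\pi_0\cdot f_\bullet,\langle(1\times\pi_0)\cdot\mathsf{D}[f_\bullet],(1\times\pi_1)\cdot\mathsf{D}[f_\bullet]\rangle\rangle:A\times(A\times A)\to B\times(B\times B)$; (v) $(1\times(\pi_0+\pi_1))\cdot\mathsf{T}(f_\bullet)=\mathsf{T}_2(f_\bullet)\cdot(1\times(\pi_0+\pi_1))$; (vi) $\ell\cdot\mathsf{T}^2(f_\bullet)=\mathsf{T}(f_\bullet)\cdot\ell$; (vii) $c\cdot\mathsf{T}^2(f_\bullet)=\mathsf{T}^2(f_\bullet)\cdot c$.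
   Context: Composition in diagrammatic order. A Cartesian left additive category: finite products, hom-sets commutative monoids with $f(g+h)=fg+fh$, $f0=0$, projections additive. For an object $X$: $\langle1,0\rangle:X\to X\times X$; $1\times\pi_i,\ 1\times(\pi_0+\pi_1):X\times(X\times X)\to X\times X$; $\ell=\langle1,0\rangle\times\langle0,1\rangle:X\times X\to(X\times X)\times(X\times X)$; $c=\langle\langle\pi_0\pi_0,\pi_1\pi_0\rangle,\langle\pi_0\pi_1,\pi_1\pi_1\rangle\rangle:(X\times X)\times(X\times X)\to(X\times X)\times(X\times X)$ (swap of middle components). $\mathsf{P}(X)=X\times X$, $\mathsf{P}(f)=f\times f$. A pre-$\mathsf{D}$-sequence $f_\bullet:A\to B$ is $(f_n)_{n\ge0}$ with $f_n:\mathsf{P}^n(A)\to B$; $(h\cdot f_\bullet)_n=\mathsf{P}^n(h)f_n$ for $h:A'\to A$; $(f_\bullet\cdot k)_n=f_nk$ for $k:B\to C$; pairing $\langle f_\bullet,g_\bullet\rangle_n=\langle f_n,g_n\rangle$; sums and $0_\bullet$ pointwise. $\mathsf{T}(f_\bullet):\mathsf{P}(A)\to\mathsf{P}(B)$, $\mathsf{T}(f_\bullet)_n=\langle\mathsf{P}^n(\pi_0)f_n,f_{n+1}\rangle$; $\mathsf{D}[f_\bullet]:\mathsf{P}(A)\to B$, $\mathsf{D}[f_\bullet]_n=f_{n+1}$. A $\mathsf{D}$-sequence is a pre-$\mathsf{D}$-sequence such that for all $n$ (maps taken for the object $\mathsf{P}^n(A)$): $\langle1,0\rangle\cdot\mathsf{D}^{n+1}[f_\bullet]=0_\bullet$;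 $(1\times(\pi_0+\pi_1))\cdot\mathsf{D}^{n+1}[f_\bullet]=(1\times\pi_0)\cdot\mathsf{D}^{n+1}[f_\bullet]+(1\times\pi_1)\cdot\mathsf{D}^{n+1}[f_\bullet]$; $\ell\cdot\mathsf{D}^{n+2}[f_\bullet]=\mathsf{D}^{n+1}[f_\bullet]$; $c\cdot\mathsf{D}^{n+2}[f_\bullet]=\mathsf{D}^{n+2}[f_\bullet]$. In $\mathsf{T}_2$, $\pi_0:A\times(A\times A)\to A$. *)

(* Defs.v *)
(* Plain Rocq (no library needed).  Composition is written in DIAGRAMMATIC
   order:  f ;; g  means "first f, then g". *)

Set Implicit Arguments.
Unset Strict Implicit.

Record CLACat := {
  ob :> Type;
  hom : ob -> ob -> Type;
  idm : forall A, hom A A;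
  comp : forall A B C, hom A B -> hom B C -> hom A C;
  comp_idl : forall A B (f : hom A B), comp (idm A) f = f;
  comp_idr : forall A B (f : hom A B), comp f (idm B) = f;
  comp_assoc : forall A B C D (f : hom A B) (g : hom B C) (h : hom C D),
      comp (comp f g) h = comp f (comp g h);
  term : ob;
  bang : forall A, hom A term;
  bang_uniq : forall A (f : hom A term), f = bang A;
  prod : ob -> ob -> ob;
  p0 : forall A B, hom (prod A B) A;
  p1 : forall A B, hom (prod A B) B;
  pair : forall C A B, hom C A -> hom C B -> hom C (prod A B);
  pair_p0 : forall C A B (f : hom C A) (g : hom C B), comp (pair f g) (p0 A B) = f;
  pair_p1 : forall C A B (f : hom C A) (g : hom C B), comp (pair f g) (p1 A B) = g;
  pair_uniq : forall C A B (h : hom C (prod A B)),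
      h = pair (comp h (p0 A B)) (comp h (p1 A B));
  zero : forall A B, hom A B;
  add : forall A B, hom A B -> hom A B -> hom A B;
  add_assoc : forall A B (f g h : hom A B), add (add f g) h = add f (add g h);
  add_comm : forall A B (f g : hom A B), add f g = add g f;
  add_0l : forall A B (f : hom A B), add (zero A B) f = f;
  comp_addr : forall A B C (f : hom A B) (g h : hom B C),
      comp f (add g h) = add (comp f g) (comp f h);
  comp_0r : forall A B C (f : hom A B), comp f (zero B C) = zero A C;
  p0_add : forall C A B (g h : hom C (prod A B)),
      comp (add g h) (p0 A B) = add (comp g (p0 A B)) (comp h (p0 A B));
  p0_zero : forall C A B, comp (zero C (prod A B)) (p0 A B) = zero C A;
  p1_add : forall C A B (g h : hom C (prod A B)),
      comp (add g h) (p1 A B) = add (comp g (p1 A B)) (comp h (p1 A B));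
  p1_zero : forall C A B, comp (zero C (prod A B)) (p1 A B) = zero C B
}.

Arguments hom {c} _ _.
Arguments idm {c} A.
Arguments comp {c A B C} _ _.
Arguments prod {c} _ _.
Arguments p0 {c} A B.
Arguments p1 {c} A B.
Arguments pair {c C A B} _ _.
Arguments zero {c} A B.
Arguments add {c A B} _ _.
Arguments term {c}.
Arguments bang {c} A.

Infix ";;" := comp (at level 40, left associativity).

Section Ops.
Variable X : CLACat.

Definition pmap (A B A' B' : X) (f : hom A A') (g : hom B B')
  : hom (prod A B) (prod A' B') :=
  pair (p0 A B ;; f) (p1 A B ;; g).

Definition P (A : X) : X := prod A A.
Definition Pm (A B : X) (f : hom A B) : hom (P A) (P B) := pmap f f.

(* P^n, unfolded so that P^(n+1)(A) = P^n(P(A)) definitionally *)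
Fixpoint Pn (n : nat) (A : X) : X :=
  match n with O => A | S k => Pn k (P A) end.
Fixpoint Pnm (n : nat) (A B : X) (f : hom A B) : hom (Pn n A) (Pn n B) :=
  match n return hom (Pn n A) (Pn n B) with
  | O => f
  | S k => Pnm k (Pm f)
  end.

(* P^n with the outer unfolding P^(n+1)(A) = P(P^n(A)) *)
Fixpoint Pout (n : nat) (A : X) : X :=
  match n with O => A | S k => P (Pout k A) end.

Definition e10 (A : X) : hom A (P A) := pair (idm A) (zero A A).
Definition e01 (A : X) : hom A (P A) := pair (zero A A) (idm A).
Definition idxpi0 (A : X) : hom (prod A (P A)) (P A) := pmap (idm A) (p0 A A).
Definition idxpi1 (A : X) : hom (prod A (P A)) (P A) := pmap (idm A) (p1 A A).
Definition idxsum (A : X) : hom (prod A (P A)) (P A) :=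
  pmap (idm A) (add (p0 A A) (p1 A A)).
Definition ell (A : X) : hom (P A) (P (P A)) := pmap (e10 A) (e01 A).
Definition cswap (A : X) : hom (P (P A)) (P (P A)) :=
  pair (pair (p0 _ _ ;; p0 A A) (p1 _ _ ;; p0 A A))
       (pair (p0 _ _ ;; p1 A A) (p1 _ _ ;; p1 A A)).

Definition preDseq (A B : X) := forall n : nat, hom (Pn n A) B.

Definition seq_eq (A B : X) (f g : preDseq A B) : Prop := forall n, f n = g n.

Definition seq_precomp (A' A B : X) (h : hom A' A) (f : preDseq A B) : preDseq A' B :=
  fun n => Pnm n h ;; f n.
Definition seq_postcomp (A B C : X) (f : preDseq A B) (k : hom B C) : preDseq A C :=
  fun n => f n ;; k.
Definition seq_pair (A B C : X) (f : preDseq A B) (g : preDseq A C)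
  : preDseq A (prod B C) := fun n => pair (f n) (g n).
Definition seq_add (A B : X) (f g : preDseq A B) : preDseq A B :=
  fun n => add (f n) (g n).
Definition seq_zero (A B : X) : preDseq A B := fun n => zero (Pn n A) B.

Definition Tseq (A B : X) (f : preDseq A B) : preDseq (P A) (P B) :=
  fun n => pair (Pnm n (p0 A A) ;; f n) (f (S n)).
Definition Dseq (A B : X) (f : preDseq A B) : preDseq (P A) B :=
  fun n => f (S n).

Fixpoint Diter (k : nat) (A B : X) (f : preDseq A B) : preDseq (Pout k A) B :=
  match k return preDseq (Pout k A) B with
  | O => f
  | S j => Dseq (Diter j f)
  end.

Definition is_Dseq (A B : X) (f : preDseq A B) : Prop :=
  forall n : nat,
    let Y := Pout n A in
    seq_eq (seq_precomp (e10 Y) (Diter (S n) f)) (seq_zero Y B) /\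
    seq_eq (seq_precomp (idxsum Y) (Diter (S n) f))
           (seq_add (seq_precomp (idxpi0 Y) (Diter (S n) f))
                    (seq_precomp (idxpi1 Y) (Diter (S n) f))) /\
    seq_eq (seq_precomp (ell Y) (Diter (S (S n)) f)) (Diter (S n) f) /\
    seq_eq (seq_precomp (cswap Y) (Diter (S (S n)) f)) (Diter (S (S n)) f).

Definition T2seq (A B : X) (f : preDseq A B) : preDseq (prod A (P A)) (prod B (P B)) :=
  seq_pair (seq_precomp (p0 A (P A)) f)
           (seq_pair (seq_precomp (idxpi0 A) (Dseq f))
                     (seq_precomp (idxpi1 A) (Dseq f))).

End Ops.

(* Main.v *)
Require Import Defs.

Arguments Pm : simpl never.
Arguments pmap : simpl never.

Lemma comp_pair {X : CLACat} (C D A B : X) (h : hom C D) (f : hom D A) (g : hom D B) :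
  h ;; pair f g = pair (h ;; f) (h ;; g).
Proof.
  rewrite (pair_uniq (h ;; pair f g)), !comp_assoc, pair_p0, pair_p1. reflexivity.
Qed.

Lemma pair_p0' {X : CLACat} (C A B D : X) (f : hom C A) (g : hom C B) (k : hom A D) :
  pair f g ;; (p0 A B ;; k) = f ;; k.
Proof. rewrite <- comp_assoc, pair_p0. reflexivity. Qed.

Lemma pair_p1' {X : CLACat} (C A B D : X) (f : hom C A) (g : hom C B) (k : hom B D) :
  pair f g ;; (p1 A B ;; k) = g ;; k.
Proof. rewrite <- comp_assoc, pair_p1. reflexivity. Qed.

Lemma pair_id {X : CLACat} (A B : X) : pair (p0 A B) (p1 A B) = idm (prod A B).
Proof. rewrite (pair_uniq (idm (prod A B))), !comp_idl. reflexivity. Qed.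

Lemma zero_pair {X : CLACat} (C A B : X) :
  zero C (prod A B) = pair (zero C A) (zero C B).
Proof. rewrite (pair_uniq (zero C (prod A B))), p0_zero, p1_zero. reflexivity. Qed.

Lemma pair_add {X : CLACat} (C A B : X) (a c : hom C A) (b d : hom C B) :
  add (pair a b) (pair c d) = pair (add a c) (add b d).
Proof.
  rewrite (pair_uniq (add (pair a b) (pair c d))), p0_add, p1_add, !pair_p0, !pair_p1.
  reflexivity.
Qed.

Ltac simp := repeat (rewrite ?comp_assoc, ?pair_p0, ?pair_p1, ?pair_p0', ?pair_p1',
   ?comp_pair, ?comp_idl, ?comp_idr, ?comp_0r, ?comp_addr).

Lemma Pm_comp {X : CLACat} (A B C : X) (a : hom A B) (b : hom B C) :
  Pm (a ;; b) = Pm a ;; Pm b.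
Proof. unfold Pm, pmap, P. simp. reflexivity. Qed.

Lemma Pm_id {X : CLACat} (A : X) : Pm (idm A) = idm (P A).
Proof. unfold Pm, pmap, P. rewrite !comp_idr. apply pair_id. Qed.

Lemma Pnm_comp {X : CLACat} (m : nat) : forall (A B C : X) (a : hom A B) (b : hom B C),
  Pnm m (a ;; b) = Pnm m a ;; Pnm m b.
Proof.
  induction m as [|m IH]; intros; simpl. reflexivity.
  rewrite Pm_comp. apply IH.
Qed.

Lemma Pnm_id {X : CLACat} (m : nat) : forall (A : X), Pnm m (idm A) = idm (Pn m A).
Proof.
  induction m as [|m IH]; intros; simpl. reflexivity.
  rewrite Pm_id. apply IH.
Qed.

Definition additive {X : CLACat} {Y Z : X} (h : hom Y Z) : Prop :=
  (forall C (u v : hom C Y), add u v ;; h = add (u ;; h) (v ;; h)) /\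
  (forall C, zero C Y ;; h = zero C Z).

Lemma p0_additive {X : CLACat} (A : X) : additive (p0 A A).
Proof. split; intros. apply p0_add. apply p0_zero. Qed.

Lemma Pm_additive {X : CLACat} (Y Z : X) (h : hom Y Z) : additive h -> additive (Pm h).
Proof.
  intros [Ha Hz]. unfold Pm, pmap, P. split; intros.
  - rewrite !comp_pair, <- !comp_assoc, p0_add, p1_add, Ha, Ha, !comp_assoc, pair_add.
    reflexivity.
  - rewrite comp_pair, <- !comp_assoc, p0_zero, p1_zero, !Hz, zero_pair. reflexivity.
Qed.

Fixpoint Poutm {X : CLACat} (k : nat) {Y Z : X} (h : hom Y Z) : hom (Pout k Y) (Pout k Z) :=
  match k return hom (Pout k Y) (Pout k Z) with
  | O => h
  | S j => Pm (Poutm j h)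
  end.

Lemma Poutm_additive {X : CLACat} (k : nat) (Y Z : X) (h : hom Y Z) :
  additive h -> additive (Poutm k h).
Proof. intros H; induction k; simpl. exact H. apply Pm_additive, IHk. Qed.

Lemma e10_nat {X : CLACat} (Y Z : X) (h : hom Y Z) : zero Y Y ;; h = zero Y Z ->
  e10 Y ;; Pm h = h ;; e10 Z.
Proof. intros Hz. unfold e10, Pm, pmap, P. simp. rewrite Hz. reflexivity. Qed.

Lemma e01_nat {X : CLACat} (Y Z : X) (h : hom Y Z) : zero Y Y ;; h = zero Y Z ->
  e01 Y ;; Pm h = h ;; e01 Z.
Proof. intros Hz. unfold e01, Pm, pmap, P. simp. rewrite Hz. reflexivity. Qed.

Lemma ell_nat {X : CLACat} (Y Z : X) (h : hom Y Z) : (forall C, zero C Y ;; h = zero C Z) ->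
  ell Y ;; Pm (Pm h) = Pm h ;; ell Z.
Proof.
  intros Hz. unfold ell, e10, e01, Pm, pmap, P. simp. rewrite !Hz. reflexivity.
Qed.

Lemma cswap_nat {X : CLACat} (Y Z : X) (h : hom Y Z) :
  cswap Y ;; Pm (Pm h) = Pm (Pm h) ;; cswap Z.
Proof. unfold cswap, Pm, pmap, P. simp. reflexivity. Qed.

Lemma idxpi0_nat {X : CLACat} (Y Z : X) (h : hom Y Z) :
  idxpi0 Y ;; Pm h = pmap h (Pm h) ;; idxpi0 Z.
Proof. unfold idxpi0, Pm, pmap, P. simp. reflexivity. Qed.

Lemma idxpi1_nat {X : CLACat} (Y Z : X) (h : hom Y Z) :
  idxpi1 Y ;; Pm h = pmap h (Pm h) ;; idxpi1 Z.
Proof. unfold idxpi1, Pm, pmap, P. simp. reflexivity. Qed.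

Lemma idxsum_nat {X : CLACat} (Y Z : X) (h : hom Y Z) : additive h ->
  idxsum Y ;; Pm h = pmap h (Pm h) ;; idxsum Z.
Proof.
  intros [Ha Hz]. unfold idxsum, Pm, pmap, P. simp. rewrite Ha. simp. reflexivity.
Qed.

Lemma comp_pairP {X : CLACat} (C D A : X) (h : hom C D) (f g : hom D A) :
  h ;; (pair f g : hom D (P A)) = (pair (h ;; f) (h ;; g) : hom C (P A)).
Proof. apply comp_pair. Qed.
Lemma zero_pairP {X : CLACat} (C A : X) :
  zero C (P A) = (pair (zero C A) (zero C A) : hom C (P A)).
Proof. apply zero_pair. Qed.
Lemma pair_addP {X : CLACat} (C A : X) (a c b d : hom C A) :
  add (pair a b : hom C (P A)) (pair c d : hom C (P A)) = (pair (add a c) (add b d) : hom C (P A)).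
Proof. apply pair_add. Qed.

Definition Loc {X : CLACat} {Y B : X} (g : preDseq Y B) : Prop :=
    seq_eq (seq_precomp (e10 Y) (Dseq g)) (seq_zero Y B) /\
    seq_eq (seq_precomp (idxsum Y) (Dseq g))
           (seq_add (seq_precomp (idxpi0 Y) (Dseq g))
                    (seq_precomp (idxpi1 Y) (Dseq g))) /\
    seq_eq (seq_precomp (ell Y) (Dseq (Dseq g))) (Dseq g) /\
    seq_eq (seq_precomp (cswap Y) (Dseq (Dseq g))) (Dseq (Dseq g)).

Lemma Loc_ext {X : CLACat} {Y B : X} (g g' : preDseq Y B) :
  Loc g -> (forall m, g m = g' m) -> Loc g'.
Proof.
  unfold Loc, seq_eq, seq_precomp, seq_zero, seq_add, Dseq.
  intros [Ha [Hb [Hc Hd]]] E; repeat split; intros m; rewrite <- ?E; auto.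
Qed.

Definition Sseq {X : CLACat} {Y Z B : X} (h : hom Y Z) (g : preDseq Z B) (u : preDseq Y B)
  : preDseq Y (P B) := fun m => pair (Pnm m h ;; g m) (u m).

Lemma Loc_S {X : CLACat} {Y Z B : X} (h : hom Y Z) (g : preDseq Z B) (u : preDseq Y B) :
  additive h -> Loc g -> Loc u -> Loc (Sseq h g u).
Proof.
  intros Hh. pose proof Hh as [Hadd Hz].
  unfold Loc, seq_eq, seq_precomp, seq_zero, seq_add, Dseq, Sseq; simpl.
  intros [Ga [Gb [Gc Gd]]] [Ua [Ub [Uc Ud]]]; repeat split; intros m.
    rewrite comp_pairP, zero_pairP, Ua, <- comp_assoc, <- Pnm_comp, e10_nat by apply Hz.
    rewrite Pnm_comp, comp_assoc, Ga, comp_0r. reflexivity.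
  - rewrite !comp_pairP, pair_addP, Ub. f_equal.
    rewrite <- !comp_assoc, <- !Pnm_comp, idxsum_nat, idxpi0_nat, idxpi1_nat by exact Hh.
    rewrite !Pnm_comp, !comp_assoc, Gb, comp_addr. reflexivity.
  - rewrite comp_pairP, Uc. f_equal.
    rewrite <- comp_assoc, <- Pnm_comp, ell_nat by apply Hz.
    rewrite Pnm_comp, comp_assoc, Gc. reflexivity.
  - rewrite comp_pairP, Ud. f_equal.
    rewrite <- comp_assoc, <- Pnm_comp, cswap_nat, Pnm_comp, comp_assoc, Gd. reflexivity.
Qed.

Lemma Diter_T {X : CLACat} {A B : X} (f : preDseq A B) (k : nat) :
  forall m, Diter k (Tseq f) m = Sseq (Poutm k (p0 A A)) (Diter k f) (Diter k (Dseq f)) m.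
Proof.
  induction k as [|k IH]; intros m. reflexivity.
  simpl. unfold Dseq at 1. rewrite IH. reflexivity.
Qed.

Lemma Diter_D_sig {X : CLACat} {A B : X} (f : preDseq A B) (n : nat) :
  existT (fun Y : X => preDseq Y B) (Pout n (P A)) (Diter n (Dseq f)) =
  existT (fun Y : X => preDseq Y B) (P (Pout n A)) (Dseq (Diter n f)).
Proof.
  induction n as [|n IH]. reflexivity.
  exact (f_equal (fun s : {Y : X & preDseq Y B} =>
            existT (fun Y : X => preDseq Y B) (P (projT1 s)) (Dseq (projT2 s))) IH).
Qed.

Lemma is_Dseq_Loc {X : CLACat} {A B : X} (f : preDseq A B) :
  is_Dseq f <-> forall n, Loc (Diter n f).
Proof. split; intros H n; exact (H n). Qed.

Lemma D_is_Dseq {X : CLACat} {A B : X} (f : preDseq A B) :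
  is_Dseq f -> is_Dseq (Dseq f).
Proof.
  intros H. apply is_Dseq_Loc. apply is_Dseq_Loc in H. intros n.
  change ((fun s : {Y : X & preDseq Y B} => Loc (projT2 s))
            (existT (fun Y : X => preDseq Y B) (Pout n (P A)) (Diter n (Dseq f)))).
  rewrite Diter_D_sig. exact (H (S n)).
Qed.

Lemma T_is_Dseq {X : CLACat} {A B : X} (f : preDseq A B) :
  is_Dseq f -> is_Dseq (Tseq f).
Proof.
  intros H. pose proof (D_is_Dseq f H) as HD. apply is_Dseq_Loc in H. apply is_Dseq_Loc in HD. apply is_Dseq_Loc. intros n.
  apply (Loc_ext (Sseq (Poutm n (p0 A A)) (Diter n f) (Diter n (Dseq f)))).
  - apply Loc_S. apply Poutm_additive, p0_additive. apply H. apply HD.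
  - intros m. symmetry. apply Diter_T.
Qed.

Theorem proposition4p4 (X : CLACat) (A B : X) (f : preDseq A B) :
  is_Dseq f ->
  is_Dseq (Dseq f) /\
  is_Dseq (Tseq f) /\
  seq_eq (seq_precomp (e10 A) (Tseq f)) (seq_postcomp f (e10 B)) /\
  seq_eq (seq_precomp (idxpi0 A) (Tseq f)) (seq_postcomp (T2seq f) (idxpi0 B)) /\
  seq_eq (seq_precomp (idxpi1 A) (Tseq f)) (seq_postcomp (T2seq f) (idxpi1 B)) /\
  seq_eq (seq_precomp (idxsum A) (Tseq f)) (seq_postcomp (T2seq f) (idxsum B)) /\
  seq_eq (seq_precomp (ell A) (Tseq (Tseq f))) (seq_postcomp (Tseq f) (ell B)) /\
  seq_eq (seq_precomp (cswap A) (Tseq (Tseq f))) (seq_postcomp (Tseq (Tseq f)) (cswap B)).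
Proof.
  intros H.
  split; [exact (D_is_Dseq f H)|].
  split; [exact (T_is_Dseq f H)|].
  assert (L : Loc f) by exact (H 0).
  unfold Loc, seq_eq, seq_precomp, seq_zero, seq_add, Dseq in L.
  destruct L as [Ha [Hb [Hc Hd]]].
  unfold seq_eq, seq_precomp, seq_postcomp, Tseq, T2seq, seq_pair, seq_precomp, Dseq.
  assert (E1 : idxpi0 A ;; p0 A A = p0 A (P A)) by (unfold idxpi0, pmap, P; simp; reflexivity).
  assert (E2 : idxpi1 A ;; p0 A A = p0 A (P A)) by (unfold idxpi1, pmap, P; simp; reflexivity).
  assert (E3 : idxsum A ;; p0 A A = p0 A (P A)) by (unfold idxsum, pmap, P; simp; reflexivity).
  assert (F1 : forall C (a : hom C B) (b c : hom C B),
     pair a (pair b c : hom C (P B)) ;; idxpi0 B = (pair a b : hom C (P B)))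
     by (intros; unfold idxpi0, pmap, P; simp; reflexivity).
  assert (F2 : forall C (a : hom C B) (b c : hom C B),
     pair a (pair b c : hom C (P B)) ;; idxpi1 B = (pair a c : hom C (P B)))
     by (intros; unfold idxpi1, pmap, P; simp; reflexivity).
  assert (F3 : forall C (a : hom C B) (b c : hom C B),
     pair a (pair b c : hom C (P B)) ;; idxsum B = (pair a (add b c) : hom C (P B)))
     by (intros; unfold idxsum, pmap, P; simp; reflexivity).
  assert (E4 : ell A ;; p0 (P A) (P A) ;; p0 A A = p0 A A)
    by (unfold ell, e10, e01, pmap, P; simp; reflexivity).
  assert (E5 : ell A ;; p0 (P A) (P A) = p0 A A ;; e10 A)
    by (unfold ell, e10, e01, pmap, P; simp; reflexivity).
  assert (E6 : ell A ;; Pm (p0 A A) = p0 A A ;; e10 A)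
    by (unfold ell, e10, e01, Pm, pmap, P; simp; reflexivity).
  assert (G1 : forall C (a b : hom C B),
     (pair a b : hom C (P B)) ;; ell B = pair (pair a (zero C B)) (pair (zero C B) b))
    by (intros; unfold ell, e10, e01, pmap, P; simp; reflexivity).
  assert (E7 : cswap A ;; p0 (P A) (P A) ;; p0 A A = p0 (P A) (P A) ;; p0 A A)
    by (unfold cswap, P; simp; reflexivity).
  assert (E8 : cswap A ;; p0 (P A) (P A) = Pm (p0 A A))
    by (unfold cswap, Pm, pmap, P; simp; reflexivity).
  assert (E9 : cswap A ;; Pm (p0 A A) = p0 (P A) (P A))
    by (unfold cswap, Pm, pmap, P; simp; symmetry; apply pair_uniq).
  assert (G2 : forall C (a b c d : hom C B),
     (pair (pair a b : hom C (P B)) (pair c d : hom C (P B)) : hom C (P (P B))) ;; cswap B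
      = pair (pair a c) (pair b d))
    by (intros; unfold cswap, P; simp; reflexivity).
  unfold P in *.
  repeat split; intros n; simpl.
  - rewrite comp_pair, Ha, <- comp_assoc, <- Pnm_comp.
    unfold e10. rewrite pair_p0, Pnm_id, comp_idl, comp_pair, comp_idr, comp_0r.
    reflexivity.
  - rewrite comp_pair, <- comp_assoc, <- Pnm_comp, E1, F1. reflexivity.
  - rewrite comp_pair, <- comp_assoc, <- Pnm_comp, E2, F2. reflexivity.
  - rewrite comp_pair, <- comp_assoc, <- Pnm_comp, E3, F3, Hb. reflexivity.
  - rewrite G1. repeat (rewrite ?comp_assoc, ?comp_pair). unfold P in *.
    f_equal; f_equal.
    + rewrite <- !comp_assoc, <- !Pnm_comp, E4. reflexivity.
    + rewrite <- !comp_assoc, <- !Pnm_comp, E5, Pnm_comp, comp_assoc, Ha, comp_0r.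
      reflexivity.
    + rewrite <- !comp_assoc, <- !Pnm_comp, E6, Pnm_comp, comp_assoc, Ha, comp_0r.
      reflexivity.
    + apply Hc.
  - repeat (rewrite ?comp_assoc, ?comp_pair). rewrite G2. unfold P in *.
    f_equal; f_equal.
    + rewrite <- !comp_assoc, <- !Pnm_comp, E7. reflexivity.
    + rewrite <- !comp_assoc, <- !Pnm_comp, E8. reflexivity.
    + rewrite <- !comp_assoc, <- !Pnm_comp, E9. reflexivity.
    + apply Hd.
Qed.
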